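(* Let $K_n$ ($n\ge1$) and $K$ be unconstrained Sierpinski carpets with the same $k,N$, generated by $\{\Psi_{n,i}\}_{i=1}^N$ and $\{\Psi_i\}_{i=1}^N$ respectively. (a) If $\Psi_{n,i}\to\Psi_i$ for each $1\le i\le N$ (in the finite-dimensional linear space of affine maps), then $K_n\to K$ in the Hausdorff metric. (b) Conversely, if $K_n\to K$ in the Hausdorff metric, then after reordering $\{\Psi_{n,i}\}_{i=1}^N$ for each $n$, one has $\Psi_{n,i}\to\Psi_i$ for each $1\le i\le N$.
   Context: USC: integers $k\ge3$, $4(k-1)\le N\le k^2-1$; maps $\Psi_i(x)=x/k+c_i$ on $\square=[0,1]^2$ with pairwise intersections of the $\Psi_i(\square)$ a segment, point or empty, $\bigcup_i\Psi_i(\square)$ connected and invariant under the 8 isometries of $\square$, $[0,1]\times\{0\}\subset\bigcup_i\Psi_i(\square)\subset\square$; $K=\bigcup_i\Psi_iK$. *)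

(* Defs.v *)
From HB Require Import structures.
From mathcomp Require Import all_boot all_order all_algebra all_fingroup.
From mathcomp Require Import all_classical all_reals all_analysis.
Set Implicit Arguments. Unset Strict Implicit. Unset Printing Implicit Defensive.
Import Order.TTheory GRing.Theory Num.Theory.
Import numFieldNormedType.Exports.
Local Open Scope classical_set_scope.
Local Open Scope ring_scope.

Section USCDefs.
Variable R : realType.
Notation P := (R * R)%type.

Definition edist2 (p q : P) : R :=
  Num.sqrt ((p.1 - q.1) ^+ 2 + (p.2 - q.2) ^+ 2).

Definition unit_square : set P :=
  [set p | 0 <= p.1 <= 1 /\ 0 <= p.2 <= 1].

Definition bottom_edge : set P := [set p | 0 <= p.1 <= 1 /\ p.2 = 0].

Definition psi (k : nat) (c : P) (p : P) : P :=
  (p.1 / k%:R + c.1, p.2 / k%:R + c.2).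

(* the 8 isometries of the unit square (dihedral group D4) *)
Definition sq_iso (b1 b2 b3 : bool) (p : P) : P :=
  let q := if b3 then (p.2, p.1) else p in
  (if b1 then 1 - q.1 else q.1, if b2 then 1 - q.2 else q.2).

(* closed segment [a,b] (a = b allowed: a point) *)
Definition segment (a b : P) : set P :=
  [set (a.1 + t * (b.1 - a.1), a.2 + t * (b.2 - a.2)) | t in `[0, 1]%classic].

Definition seg_point_or_empty (S : set P) : Prop :=
  S = set0 \/ exists a b, S = segment a b.

Definition level1 (k N : nat) (c : 'I_N -> P) : set P :=
  \bigcup_(i in [set: 'I_N]) (psi k (c i) @` unit_square).

Definition USC (k N : nat) (c : 'I_N -> P) : Prop :=
  [/\ (3 <= k)%N, (4 * (k - 1) <= N)%N & (N <= k ^ 2 - 1)%N] /\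
  (forall i j : 'I_N, i != j ->
     seg_point_or_empty (psi k (c i) @` unit_square `&` psi k (c j) @` unit_square)) /\
  connected (level1 k c) /\
  (forall b1 b2 b3, sq_iso b1 b2 b3 @` level1 k c = level1 k c) /\
  bottom_edge `<=` level1 k c /\ level1 k c `<=` unit_square.

Definition attractor (k N : nat) (c : 'I_N -> P) (K : set P) : Prop :=
  [/\ K !=set0, compact K &
      K = \bigcup_(i in [set: 'I_N]) (psi k (c i) @` K)].

Definition pt_set_dist (x : P) (B : set P) : \bar R :=
  ereal_inf [set (edist2 x y)%:E | y in B].

Definition hausdorff_dist (A B : set P) : \bar R :=
  Order.max (ereal_sup [set pt_set_dist x B | x in A])
            (ereal_sup [set pt_set_dist y A | y in B]).

Definition hausdorff_cvg (Kn : nat -> set P) (K : set P) : Prop :=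
  (fun n => hausdorff_dist (Kn n) K) @ \oo --> 0%E.

End USCDefs.

(* Main.v *)
Require Import Defs.
Set Warnings "-all".
From HB Require Import structures.
From mathcomp Require Import all_boot all_order all_algebra all_fingroup.
From mathcomp Require Import all_classical all_reals all_analysis.
From mathcomp Require Import ring lra zify.
Import Order.TTheory GRing.Theory Num.Theory.
Import numFieldNormedType.Exports.
Local Open Scope classical_set_scope.
Local Open Scope ring_scope.
Section Basic.
Variable R : realType.
Set Implicit Arguments. Unset Strict Implicit.
Notation P := (R * R)%type.
Implicit Types (x y z a b : P).

Lemma mink (a b c d : R) :
  Num.sqrt ((a + b) ^+ 2 + (c + d) ^+ 2) <=
  Num.sqrt (a ^+ 2 + c ^+ 2) + Num.sqrt (b ^+ 2 + d ^+ 2).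
Proof.
set u := Num.sqrt (a ^+ 2 + c ^+ 2); set v := Num.sqrt (b ^+ 2 + d ^+ 2).
have u0 : 0 <= u by apply: sqrtr_ge0.
have v0 : 0 <= v by apply: sqrtr_ge0.
have u2 : u ^+ 2 = a ^+ 2 + c ^+ 2 by rewrite sqr_sqrtr // addr_ge0 // sqr_ge0.
have v2 : v ^+ 2 = b ^+ 2 + d ^+ 2 by rewrite sqr_sqrtr // addr_ge0 // sqr_ge0.
have key : a * b + c * d <= u * v.
  have h1 : (a * b + c * d) ^+ 2 <= (u * v) ^+ 2.
    rewrite exprMn u2 v2.
    have : 0 <= (a * d - b * c) ^+ 2 by apply: sqr_ge0.
    by move=> h; nra.
  have uv0 : 0 <= u * v by apply: mulr_ge0.
  case: (lerP (a * b + c * d) 0) => h; first by apply: le_trans uv0.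
  by rewrite -(ler_pXn2r (n:=2)) // ?nnegrE // ltW.
rewrite -[u + v]ger0_norm ?addr_ge0 // -sqrtr_sqr ler_sqrt ?sqr_ge0 //.
have : (u + v) ^+ 2 = u ^+ 2 + v ^+ 2 + 2 * (u * v) by rewrite sqrrD; ring.
move=> ->; rewrite u2 v2; nra.
Qed.

Lemma edist_ge0 x y : 0 <= edist2 x y.
Proof. exact: sqrtr_ge0. Qed.

Lemma edist_sym x y : edist2 x y = edist2 y x.
Proof. by rewrite /edist2 -(sqrrN (x.1 - y.1)) -(sqrrN (x.2 - y.2)) !opprB. Qed.

Lemma edist_tri x y z : edist2 x z <= edist2 x y + edist2 y z.
Proof.
rewrite /edist2.
have -> : x.1 - z.1 = (x.1 - y.1) + (y.1 - z.1) by ring.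
have -> : x.2 - z.2 = (x.2 - y.2) + (y.2 - z.2) by ring.
exact: mink.
Qed.

Lemma edist_c1 x y : `|x.1 - y.1| <= edist2 x y.
Proof.
rewrite /edist2 -sqrtr_sqr ler_sqrt ?addr_ge0 ?sqr_ge0 //.
by rewrite lerDl sqr_ge0.
Qed.

Lemma edist_c2 x y : `|x.2 - y.2| <= edist2 x y.
Proof.
rewrite /edist2 -sqrtr_sqr ler_sqrt ?addr_ge0 ?sqr_ge0 //.
by rewrite lerDr sqr_ge0.
Qed.

Lemma edist_le_sum x y : edist2 x y <= `|x.1 - y.1| + `|x.2 - y.2|.
Proof.
have := mink (x.1 - y.1) 0 0 (x.2 - y.2).
rewrite !addr0 !add0r expr0n /= addr0 add0r !sqrtr_sqr.
by [].
Qed.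

Lemma edist_scale (t : R) x y : 0 <= t ->
  Num.sqrt ((t * x.1 - t * y.1) ^+ 2 + (t * x.2 - t * y.2) ^+ 2) = t * edist2 x y.
Proof.
move=> t0; rewrite /edist2 -!mulrBr !exprMn -mulrDr sqrtrM ?sqr_ge0 //.
by rewrite sqrtr_sqr ger0_norm.
Qed.

Lemma edist_psi (k : nat) a b y z : (0 < k)%N ->
  edist2 (psi k a y) (psi k b z) <= edist2 y z / k%:R + edist2 a b.
Proof.
move=> k0; rewrite /psi.
have kp : 0 < (k%:R : R) by rewrite ltr0n.
set y' : P := (y.1 / k%:R, y.2 / k%:R); set z' : P := (z.1 / k%:R, z.2 / k%:R).
have -> : edist2 y z / k%:R = edist2 y' z'.
  rewrite mulrC -edist_scale ?invr_ge0 ?ltW // /y' /z' /=.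
  by rewrite ![k%:R^-1 * _]mulrC.
rewrite /edist2 /= .
have -> : y.1 / k%:R + a.1 - (z.1 / k%:R + b.1) = (y.1 / k%:R - z.1 / k%:R) + (a.1 - b.1) by ring.
have -> : y.2 / k%:R + a.2 - (z.2 / k%:R + b.2) = (y.2 / k%:R - z.2 / k%:R) + (a.2 - b.2) by ring.
exact: mink.
Qed.

End Basic.
Section Geo.
Variable R : realType.
Set Implicit Arguments. Unset Strict Implicit.
Notation P := (R * R)%type.
Implicit Types (x y z a b c : P).

Lemma lim_pow (k : nat) (M e : R) : (1 < k)%N -> 0 < e ->
  exists m : nat, M / (k%:R ^+ m) < e.
Proof.
move=> k1 e0.
have kp : 0 < (k%:R : R) by rewrite ltr0n; lia.
case: (lerP M 0) => M0.
  exists 0%N; rewrite expr0 divr1; exact: le_lt_trans M0 e0.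
have h := archi_boundP (ltW (divr_gt0 M0 e0)).
set m := Num.Def.archi_bound (M / e) in h.
exists m.
have km : (m%:R : R) <= k%:R ^+ m.
  rewrite -natrX ler_nat. apply: ltnW. apply: (leq_trans (ltn_expl m (isT : 1 < 2)%N)).
  by rewrite leq_exp2r //; lia.
have kmp : 0 < (k%:R : R) ^+ m by apply: exprn_gt0.
rewrite ltr_pdivrMr // mulrC -ltr_pdivrMr //.
exact: lt_le_trans h km.
Qed.

Lemma le_of_pow (k : nat) (a b M : R) : (1 < k)%N ->
  (forall m : nat, a <= b + M / (k%:R ^+ m)) -> a <= b.
Proof.
move=> k1 H; rewrite leNgt; apply/negP => ab.
have ba : 0 < a - b by rewrite subr_gt0.
have [m Hm] := @lim_pow k M (a - b) k1 ba.
have := H m; rewrite -lerBlDl; move=> h.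
by have := lt_le_trans Hm h; rewrite ltxx.
Qed.

Lemma cellP (k : nat) c x : (0 < k)%N ->
  (psi k c @` (@unit_square R)) x <->
  (c.1 <= x.1 <= c.1 + k%:R^-1 /\ c.2 <= x.2 <= c.2 + k%:R^-1).
Proof.
move=> k0; have kp : 0 < (k%:R : R) by rewrite ltr0n.
split.
  case=> p [/andP [p10 p11] /andP [p20 p21]] <-; rewrite /psi /=.
  have ki : 0 < (k%:R : R)^-1 by rewrite invr_gt0.
  have d1 : 0 <= p.1 / k%:R by rewrite divr_ge0 // ltW.
  have d1' : p.1 / k%:R <= k%:R^-1 by rewrite -[X in _ <= X]mul1r ler_pM2r.
  have d2 : 0 <= p.2 / k%:R by rewrite divr_ge0 // ltW.
  have d2' : p.2 / k%:R <= k%:R^-1 by rewrite -[X in _ <= X]mul1r ler_pM2r.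
  split; apply/andP; split; lra.
case=> /andP [h1 h2] /andP [h3 h4].
exists ((x.1 - c.1) * k%:R, (x.2 - c.2) * k%:R).
  rewrite /(@unit_square R) /=; split; apply/andP; split.
  - by rewrite mulr_ge0 ?subr_ge0 // ltW.
  - by rewrite -ler_pdivlMr // mul1r lerBlDl.
  - by rewrite mulr_ge0 ?subr_ge0 // ltW.
  - by rewrite -ler_pdivlMr // mul1r lerBlDl.
rewrite /psi /= !mulfK ?gt_eqF // !subrK.
by case: x {h1 h2 h3 h4}.
Qed.

Definition Dsep (k : nat) a b :=
  k%:R^-1 <= `|a.1 - b.1| \/ k%:R^-1 <= `|a.2 - b.2|.

Lemma seg_no_corner (u v p : P) (h1 h2 : R) : 0 < h1 -> 0 < h2 ->
  segment u v p -> segment u v (p.1 + h1, p.2) -> segment u v (p.1, p.2 + h2) -> False.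
Proof.
move=> h10 h20 [t0 _ e0] [t1 _ e1] [t2 _ e2].
have e01 := congr1 fst e0; have e02 := congr1 snd e0.
have e11 := congr1 fst e1; have e12 := congr1 snd e1.
have e21 := congr1 fst e2; have e22 := congr1 snd e2.
rewrite /= in e01 e02 e11 e12 e21 e22.
have A : (t1 - t0) * (v.1 - u.1) = h1.
  have : u.1 + t1 * (v.1 - u.1) - (u.1 + t0 * (v.1 - u.1)) = h1 by rewrite e11 e01; ring.
  by move=> <-; ring.
have B : (t1 - t0) * (v.2 - u.2) = 0.
  have : u.2 + t1 * (v.2 - u.2) - (u.2 + t0 * (v.2 - u.2)) = 0 by rewrite e12 e02; ring.
  by move=> <-; ring.
have C : (t2 - t0) * (v.2 - u.2) = h2.
  have : u.2 + t2 * (v.2 - u.2) - (u.2 + t0 * (v.2 - u.2)) = h2 by rewrite e22 e02; ring.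
  by move=> <-; ring.
have : h1 * h2 = 0.
  rewrite -A -C.
  have -> : (t1 - t0) * (v.1 - u.1) * ((t2 - t0) * (v.2 - u.2)) =
     ((t1 - t0) * (v.2 - u.2)) * ((t2 - t0) * (v.1 - u.1)) by ring.
  by rewrite B mul0r.
move/eqP; rewrite mulf_eq0 => /orP [] /eqP h; [move: h10 | move: h20]; by rewrite h ltxx.
Qed.

Lemma USC_k (k N : nat) (c : 'I_N -> P) : USC k c -> (3 <= k)%N.
Proof. by case=> [[]]. Qed.

Lemma USC_D (k N : nat) (c : 'I_N -> P) : USC k c ->
  forall i j, i != j -> Dsep k (c i) (c j).
Proof.
move=> U i j ij; have k3 := USC_k U; have k0 : (0 < k)%N by lia.
case: U => _ [Hseg _].
rewrite /Dsep; apply: contrapT => /not_orP [/negP h1 /negP h2].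
rewrite -ltNge in h1; rewrite -ltNge in h2.
set a := c i in h1 h2; set b := c j in h1 h2.
pose m : P := (Num.max a.1 b.1, Num.max a.2 b.2).
set s := (k%:R : R)^-1 in h1 h2.
have sp : 0 < s by rewrite invr_gt0 ltr0n.
have inI : forall q : P, (Num.max a.1 b.1 <= q.1 <= Num.min a.1 b.1 + s) ->
    (Num.max a.2 b.2 <= q.2 <= Num.min a.2 b.2 + s) ->
    (psi k (c i) @` (@unit_square R) `&` psi k (c j) @` (@unit_square R)) q.
  move=> q /andP [q1 q1'] /andP [q2 q2'].
  have f1 : a.1 <= Num.max a.1 b.1 by rewrite le_max lexx.
  have f2 : b.1 <= Num.max a.1 b.1 by rewrite le_max lexx orbT.
  have f3 : a.2 <= Num.max a.2 b.2 by rewrite le_max lexx.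
  have f4 : b.2 <= Num.max a.2 b.2 by rewrite le_max lexx orbT.
  have g1 : Num.min a.1 b.1 <= a.1 by rewrite ge_min lexx.
  have g2 : Num.min a.1 b.1 <= b.1 by rewrite ge_min lexx orbT.
  have g3 : Num.min a.2 b.2 <= a.2 by rewrite ge_min lexx.
  have g4 : Num.min a.2 b.2 <= b.2 by rewrite ge_min lexx orbT.
  split; apply/(cellP _ _ k0); rewrite -/s -/a -/b; split; apply/andP; split; lra.
have mm1 : Num.max a.1 b.1 = Num.min a.1 b.1 + `|a.1 - b.1|.
  case: (leP a.1 b.1) => h.
  - rewrite distrC ger0_norm ?subr_ge0 //; ring.
  - rewrite ger0_norm ?subr_ge0 ?ltW //; ring.
have mm2 : Num.max a.2 b.2 = Num.min a.2 b.2 + `|a.2 - b.2|.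
  case: (leP a.2 b.2) => h.
  - rewrite distrC ger0_norm ?subr_ge0 //; ring.
  - rewrite ger0_norm ?subr_ge0 ?ltW //; ring.
set H1 := s - `|a.1 - b.1|; set H2 := s - `|a.2 - b.2|.
have H1p : 0 < H1 by rewrite subr_gt0.
have H2p : 0 < H2 by rewrite subr_gt0.
have Im : (psi k (c i) @` (@unit_square R) `&` psi k (c j) @` (@unit_square R)) m.
  by apply: inI; apply/andP; rewrite /m /=; split; lra.
have Im1 : (psi k (c i) @` (@unit_square R) `&` psi k (c j) @` (@unit_square R)) (m.1 + H1, m.2).
  by apply: inI; apply/andP; rewrite /m /H1 /=; split; lra.
have Im2 : (psi k (c i) @` (@unit_square R) `&` psi k (c j) @` (@unit_square R)) (m.1, m.2 + H2).
  by apply: inI; apply/andP; rewrite /m /H2 /=; split; lra.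
case: (Hseg i j ij) => [E | [u [v E]]].
  by move: Im; rewrite E.
rewrite E in Im Im1 Im2.
exact: (seg_no_corner H1p H2p Im Im1 Im2).
Qed.

End Geo.
Section USCfacts.
Variable R : realType.
Set Implicit Arguments. Unset Strict Implicit.
Notation P := (R * R)%type.
Variables (k N : nat) (c : 'I_N -> P).
Hypothesis U : USC k c.

Let k3 : (3 <= k)%N. Proof. exact: USC_k U. Qed.
Let k0 : (0 < k)%N. Proof. lia. Qed.
Let kp : 0 < (k%:R : R). Proof. by rewrite ltr0n. Qed.

Lemma USC_cb i : [/\ 0 <= (c i).1, (c i).1 + k%:R^-1 <= 1,
  0 <= (c i).2 & (c i).2 + k%:R^-1 <= 1].
Proof.
case: U => _ [_ [_ [_ [_ sub]]]].
have ki : 0 < (k%:R : R)^-1 by rewrite invr_gt0.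
have A : (@unit_square R) (c i).
  apply: sub; exists i => //; apply/(cellP _ _ k0); rewrite !lexx /=; split; lra.
have B : (@unit_square R) ((c i).1 + k%:R^-1, (c i).2 + k%:R^-1).
  apply: sub; exists i => //; apply/(cellP _ _ k0); rewrite !lexx /=; split; apply/andP; split; lra.
case: A => /andP [a1 _] /andP [a2 _]; case: B => /andP [_ b1] /andP [_ b2].
by split.
Qed.

Lemma USC_origin : exists i, c i = (0, 0).
Proof.
case: U => _ [_ [_ [_ [bot _]]]].
have : level1 k c (0, 0) by apply: bot; split => //; rewrite lexx ler01.
case=> i _ /(cellP _ _ k0) [/andP [h1 _] /andP [h2 _]].
exists i; case: (USC_cb i) => a _ b _.
have -> : c i = ((c i).1, (c i).2) by case: (c i).
by congr pair; apply/eqP; rewrite eq_le ?h1 ?h2 ?a ?b.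
Qed.

Lemma USC_corner : exists i, 1 - k%:R^-1 <= (c i).1 /\ 1 - k%:R^-1 <= (c i).2.
Proof.
case: U => _ [_ [_ [sym [bot _]]]].
have o : level1 k c (0, 0) by apply: bot; split => //; rewrite lexx ler01.
have : level1 k c (1, 1).
  rewrite -(sym true true false); exists (0, 0) => //.
  by rewrite /sq_iso /= !subr0.
case=> i _ /(cellP _ _ k0) [/andP [_ h1] /andP [_ h2]].
rewrite /= in h1 h2; by exists i; split; lra.
Qed.

Variable K : set P.
Hypothesis A : attractor k c K.

Lemma att_inv i y : K y -> K (psi k (c i) y).
Proof.
case: A => _ _ E => Ky; rewrite E; exists i => //; by exists y.
Qed.

Lemma att_dec x : K x -> exists i y, K y /\ x = psi k (c i) y.
Proof.
case: A => _ _ E; rewrite {1}E => -[i _ [y Ky <-]]; by exists i, y.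
Qed.

Lemma att_sq : K `<=` (@unit_square R).
Proof.
case: A => ne cK _.
have [M HM] : exists M : R, forall x, K x -> `|x| <= M.
  have := compact_bounded cK; rewrite /bounded_near => H.
  case: H => M0 [_ HM]; exists (M0 + 1) => x Kx; apply: (HM (M0 + 1)) => //.
  by rewrite ltrDl.
have k1 : (1 < k)%N by lia.
have ki : 0 < (k%:R : R)^-1 by rewrite invr_gt0.
have H : forall m x, K x ->
  [/\ x.1 <= 1 + M / k%:R ^+ m, 0 <= x.1 + M / k%:R ^+ m,
      x.2 <= 1 + M / k%:R ^+ m & 0 <= x.2 + M / k%:R ^+ m].
  elim=> [|m IH] x Kx.
    have := HM x Kx; rewrite prod_normE ge_max => /andP [n1 n2].
    rewrite expr0 divr1.
    move: n1 n2; rewrite !ler_norml => /andP [q1 q2] /andP [q3 q4]; split; lra.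
  have [i [y [Ky ->]]] := att_dec Kx.
  have [c1 c2 c3 c4] := USC_cb i.
  have [y1 y2 y3 y4] := IH y Ky.
  rewrite /psi /=.
  set t := M / k%:R ^+ m in y1 y2 y3 y4 *.
  have et : M / k%:R ^+ m.+1 = t / k%:R.
    by rewrite /t exprS invfM mulrA mulrAC.
  rewrite et.
  have a0 : (1 + t) / k%:R = k%:R^-1 + t / k%:R by rewrite mulrDl mul1r.
  have a1 : y.1 / k%:R <= (1 + t) / k%:R by rewrite ler_pM2r.
  have a2 : 0 <= y.1 / k%:R + t / k%:R by rewrite -mulrDl mulr_ge0 // ltW.
  have a3 : y.2 / k%:R <= (1 + t) / k%:R by rewrite ler_pM2r.
  have a4 : 0 <= y.2 / k%:R + t / k%:R by rewrite -mulrDl mulr_ge0 // ltW.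
  split; lra.
move=> x Kx; split; apply/andP; split.
- apply: (@le_of_pow R k _ _ M k1) => m; have [_ h _ _] := H m x Kx; lra.
- apply: (@le_of_pow R k _ _ M k1) => m; have [h _ _ _] := H m x Kx; lra.
- apply: (@le_of_pow R k _ _ M k1) => m; have [_ _ _ h] := H m x Kx; lra.
- apply: (@le_of_pow R k _ _ M k1) => m; have [_ _ h _] := H m x Kx; lra.
Qed.

Lemma att_small r : 0 < r -> exists z, K z /\ (0 < z.1 < r) /\ (0 < z.2 < r).
Proof.
move=> r0.
have [i0 e0] := USC_origin. have [i1 [h1 h2]] := USC_corner.
have k1 : (1 < k)%N by lia.
have ki : k%:R^-1 < (1 : R) by rewrite invf_lt1 // ltr1n.
case: (A) => [[y Ky] _ _].
set z0 := psi k (c i1) y.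
have Kz0 : K z0 by apply: att_inv.
have [/andP [_ s1] /andP [_ s2]] := att_sq Kz0.
have [/andP [y1 _] /andP [y2 _]] := att_sq Ky.
have p1 : 0 < z0.1.
  rewrite /z0 /psi /=; have : 0 <= y.1 / k%:R by rewrite divr_ge0 // ltW.
  lra.
have p2 : 0 < z0.2.
  rewrite /z0 /psi /=; have : 0 <= y.2 / k%:R by rewrite divr_ge0 // ltW.
  lra.
have It : forall m, K (z0.1 / k%:R ^+ m, z0.2 / k%:R ^+ m).
  elim=> [|m IH]; first by rewrite expr0 !divr1; case: (z0) Kz0.
  have := att_inv i0 IH; rewrite /psi e0 /= !addr0 exprS invfM !mulrA.
  by rewrite ![_ / k%:R ^+ m / _]mulrAC.
have [m Hm] := @lim_pow R k 1 r k1 r0.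
have kpos : 0 < (k%:R : R) ^+ m by apply: exprn_gt0.
exists (z0.1 / k%:R ^+ m, z0.2 / k%:R ^+ m); split => //=.
split; apply/andP; split; rewrite ?divr_gt0 //.
- apply: le_lt_trans Hm; by rewrite ler_pM2r ?invr_gt0.
- apply: le_lt_trans Hm; by rewrite ler_pM2r ?invr_gt0.
Qed.

End USCfacts.
Section Approx.
Variable R : realType.
Set Implicit Arguments. Unset Strict Implicit.
Notation P := (R * R)%type.

Lemma sq_edist (x z : P) : (@unit_square R) x -> (@unit_square R) z -> edist2 x z <= 2.
Proof.
case=> /andP [a1 a2] /andP [a3 a4] [/andP [b1 b2] /andP [b3 b4]].
apply: (le_trans (edist_le_sum x z)).
have h1 : `|x.1 - z.1| <= 1 by rewrite ler_norml; apply/andP; split; lra.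
have h2 : `|x.2 - z.2| <= 1 by rewrite ler_norml; apply/andP; split; lra.
lra.
Qed.

Lemma approx (k N : nat) (a b : 'I_N -> P) (A B : set P) (d : R) :
  (1 < k)%N -> A `<=` (@unit_square R) -> B `<=` (@unit_square R) -> B !=set0 ->
  (forall x, A x -> exists i y, A y /\ x = psi k (a i) y) ->
  (forall i z, B z -> B (psi k (b i) z)) ->
  0 <= d -> (forall i, edist2 (a i) (b i) <= d) ->
  forall x, A x -> forall e, 0 < e ->
    exists z, B z /\ edist2 x z <= d * k%:R / (k%:R - 1) + e.
Proof.
move=> k1 Asq Bsq [b0 Bb0] Adec Binv d0 Hd.
have kp : 0 < (k%:R : R) by rewrite ltr0n; lia.
have k1p : 0 < (k%:R : R) - 1 by rewrite subr_gt0 ltr1n.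
set C := d * k%:R / (k%:R - 1).
have C0 : 0 <= C by rewrite /C divr_ge0 ?mulr_ge0 // ltW.
have EC : C / k%:R + d = C.
  rewrite /C; field; rewrite ?gt_eqF //; apply/andP; split; rewrite gt_eqF //.
pose Q t := forall x, A x -> forall e, 0 < e -> exists z, B z /\ edist2 x z <= t + e.
have Qmono : forall t t', t <= t' -> Q t -> Q t'.
  move=> t t' tt' Qt x Ax e e0; have [z [Bz h]] := Qt x Ax e e0.
  by exists z; split => //; lra.
have Q2 : Q 2.
  move=> x Ax e e0; exists b0; split => //.
  have := sq_edist (Asq _ Ax) (Bsq _ Bb0); lra.
have Qstep : forall t, Q t -> Q (t / k%:R + d).
  move=> t Qt x Ax e e0.
  have [i [y [Ay ->]]] := Adec x Ax.
  have [z [Bz h]] := Qt y Ay (e * k%:R) (mulr_gt0 e0 kp).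
  exists (psi k (b i) z); split; first exact: Binv.
  apply: (le_trans (edist_psi _ _ _ _ (ltnW k1))).
  have : edist2 y z / k%:R <= (t + e * k%:R) / k%:R by rewrite ler_pM2r ?invr_gt0.
  rewrite mulrDl mulfK ?gt_eqF //.
  have := Hd i; lra.
have Qm : forall m : nat, Q (2 / k%:R ^+ m + C).
  elim=> [|m IH].
    by apply: (Qmono 2); rewrite ?expr0 ?divr1 //; lra.
  apply: (Qmono _ _ _ (Qstep _ IH)).
  rewrite mulrDl -{2}EC addrA lerD2r exprS invfM mulrA mulrAC //.
move=> x Ax e e0.
have e2 : 0 < e / 2 by rewrite divr_gt0.
have [m Hm] := @lim_pow R k 2 (e / 2) k1 e2.
have [z [Bz h]] := Qm m x Ax (e / 2) e2.
exists z; split => //.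
have : e / 2 + e / 2 = e by rewrite -splitr.
lra.
Qed.

Lemma hd_le (A B : set P) (t : R) :
  (forall x, A x -> forall e, 0 < e -> exists z, B z /\ edist2 x z <= t + e) ->
  (ereal_sup [set pt_set_dist x B | x in A] <= t%:E)%E.
Proof.
move=> H; apply: ge_ereal_sup => _ [x Ax <-].
apply/lee_addgt0Pr => e e0.
have [z [Bz hz]] := H x Ax e e0.
apply: le_trans (ereal_inf_lbound _) _; first by exists z.
by rewrite -EFinD lee_fin.
Qed.

Lemma pt_dist_ge0 x (B : set P) : (0 <= pt_set_dist x B)%E.
Proof.
apply/ereal_infP => _ [y _ <-]; rewrite lee_fin; exact: edist_ge0.
Qed.

Lemma hd_ge0 (A B : set P) : A !=set0 -> (0 <= hausdorff_dist A B)%E.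
Proof.
move=> [x Ax]; rewrite /hausdorff_dist le_max; apply/orP; left.
apply: le_trans (pt_dist_ge0 x B) _.
by apply: ereal_sup_ubound; exists x.
Qed.

Lemma hd_lt (A B : set P) (e : R) : (hausdorff_dist A B < e%:E)%E ->
  (forall x, A x -> exists z, B z /\ edist2 x z < e) /\
  (forall z, B z -> exists x, A x /\ edist2 z x < e).
Proof.
rewrite /hausdorff_dist gt_max => /andP [h1 h2]; split.
- move=> x Ax.
  have : (pt_set_dist x B < e%:E)%E.
    by apply: le_lt_trans h1; apply: ereal_sup_ubound; exists x.
  move/ereal_inf_lt => [_ [z Bz <-]]; rewrite lte_fin => h.
  by exists z.
- move=> z Bz.
  have : (pt_set_dist z A < e%:E)%E.
    by apply: le_lt_trans h2; apply: ereal_sup_ubound; exists z.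
  move/ereal_inf_lt => [_ [x Ax <-]]; rewrite lte_fin => h.
  by exists x.
Qed.

End Approx.
Section PartA.
Variable R : realType.
Set Implicit Arguments. Unset Strict Implicit.
Notation P := (R * R)%type.

Lemma cvg_edist (f : nat -> P) (l : P) : f @ \oo --> l ->
  forall e, 0 < e -> \forall n \near \oo, edist2 (f n) l < e.
Proof.
move=> /cvgrPdist_lt H e e0.
have e2 : 0 < e / 2 by rewrite divr_gt0.
apply: filterS (H _ e2) => n.
rewrite prod_normE gt_max => /andP [h1 h2].
apply: (le_lt_trans (edist_le_sum _ _)).
rewrite distrC in h1; rewrite distrC in h2.
rewrite [X in _ < X]splitr; exact: ltrD.
Qed.

Lemma edist_cvg (f : nat -> P) (l : P) :
  (forall e, 0 < e -> \forall n \near \oo, edist2 (f n) l < e) -> f @ \oo --> l.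
Proof.
move=> H; apply/cvgrPdist_lt => e e0.
apply: filterS (H _ e0) => n h.
rewrite prod_normE gt_max; apply/andP; split; apply: le_lt_trans h.
- rewrite distrC; exact: edist_c1.
- rewrite distrC; exact: edist_c2.
Qed.

Lemma ecvg0 (u : nat -> \bar R) : (forall n, (0 <= u n)%E) ->
  (forall e, 0 < e -> \forall n \near \oo, (u n <= e%:E)%E) -> u @ \oo --> 0%E.
Proof.
move=> u0 H; apply/fine_cvgP; split.
  apply: filterS (H 1 ltr01) => n hn.
  by rewrite ge0_fin_numE ?u0 // (le_lt_trans hn) // ltey.
apply/cvgrPdist_lt => e e0.
have e2 : 0 < e / 2 by rewrite divr_gt0.
apply: filterS (H _ e2) => n /=; move: (u0 n).
case: (u n) => // r; rewrite !lee_fin /= => r0 re.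
rewrite sub0r normrN ger0_norm //.
apply: le_lt_trans re _; rewrite ltr_pdivrMr // ltr_pMr //; lra.
Qed.

Lemma partA (k N : nat) (cn : nat -> 'I_N -> P) (c : 'I_N -> P)
  (Kn : nat -> set P) (K : set P) :
  (forall n, USC k (cn n)) -> USC k c ->
  (forall n, attractor k (cn n) (Kn n)) -> attractor k c K ->
  (forall i : 'I_N, (fun n => cn n i) @ \oo --> c i) -> hausdorff_cvg Kn K.
Proof.
move=> Un U An A Hc.
have k3 := USC_k U; have k1 : (1 < k)%N by lia.
have kp : 0 < (k%:R : R) by rewrite ltr0n; lia.
have k1p : 0 < (k%:R : R) - 1 by rewrite subr_gt0 ltr1n.
apply: ecvg0.
  move=> n; apply: hd_ge0; by case: (An n).
move=> e e0.
set d := e * (k%:R - 1) / k%:R.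
have d0 : 0 < d by rewrite /d divr_gt0 // mulr_gt0.
have Cd : d * k%:R / (k%:R - 1) = e.
  rewrite /d; field; rewrite ?gt_eqF //; apply/andP; split; rewrite gt_eqF //.
have : \forall n \near \oo, forall i, edist2 (cn n i) (c i) < d.
  apply: filter_forall => i; exact: cvg_edist (Hc i) _ d0.
apply: filterS => n Hn.
rewrite /hausdorff_dist ge_max; apply/andP; split; apply: hd_le.
- move=> x Kx e' e'0.
  have := @approx R k N (cn n) c (Kn n) K d k1 (att_sq (Un n) (An n)) (att_sq U A)
    _ (att_dec (An n)) (att_inv A) (ltW d0) (fun i => ltW (Hn i)) x Kx e' e'0.
  by rewrite Cd; apply; case: A.
- move=> x Kx e' e'0.
  have := @approx R k N c (cn n) K (Kn n) d k1 (att_sq U A) (att_sq (Un n) (An n))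
    _ (att_dec A) (att_inv (An n)) (ltW d0) _ x Kx e' e'0.
  rewrite Cd; apply; first by case: (An n).
  by move=> i; rewrite edist_sym; apply: ltW.
Qed.

End PartA.
Section Uniq.
Variable R : realType.
Set Implicit Arguments. Unset Strict Implicit.
Notation P := (R * R)%type.

Definition cellb (k : nat) (p x : P) :=
  (p.1 <= x.1 <= p.1 + k%:R^-1) /\ (p.2 <= x.2 <= p.2 + k%:R^-1).

Lemma closed_edist (K : set P) x : closed K ->
  (forall e, 0 < e -> exists z, K z /\ edist2 x z < e) -> K x.
Proof.
move=> cK H; apply: cK => B /nbhs_ballP [e /= e0 HB].
have [z [Kz hz]] := H e e0; exists z; split => //; apply: HB.
rewrite -ball_normE /ball_ /= prod_normE gt_max; apply/andP; split.
- exact: le_lt_trans (edist_c1 _ _) hz.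
- exact: le_lt_trans (edist_c2 _ _) hz.
Qed.

Lemma fin_pos_min (I : finType) (f : I -> R) : (forall i, 0 < f i) ->
  exists2 r, 0 < r & forall i, r <= f i.
Proof.
move=> H; exists (\big[Order.min/1]_i f i).
  by apply: lt_bigmin => // i _; apply: H.
by move=> i; apply: bigmin_le.
Qed.

Lemma fin_pigeon (I : finType) (Q : I -> R -> Prop) :
  (forall j e e', 0 < e -> e <= e' -> Q j e -> Q j e') ->
  (forall e, 0 < e -> exists j, Q j e) -> exists j, forall e, 0 < e -> Q j e.
Proof.
move=> mono H; apply: contrapT => /forallNP Hn.
have : forall j, exists e, 0 < e /\ ~ Q j e.
  move=> j; have := Hn j => /existsNP [e /not_implyP [e0 nQ]]; by exists e.
move/choice => [g Hg].
have [r r0 Hr] := fin_pos_min (fun j => (Hg j).1).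
have [j Qj] := H r r0.
by apply: (Hg j).2; apply: mono Qj.
Qed.

Lemma near_ex (Q : nat -> Prop) : (\forall n \near \oo, Q n) -> exists n, Q n.
Proof. by case=> M _ HM; exists M; apply: HM => /=. Qed.

Lemma near_comp (Q : nat -> Prop) (h : nat -> nat) : (forall m, (m <= h m)%N) ->
  (\forall n \near \oo, Q n) -> \forall m \near \oo, Q (h m).
Proof.
move=> hh [M _ HM]; exists M => // m /= hm; apply: HM => /=.
exact: leq_trans hm (hh m).
Qed.

Lemma not_near (Q : nat -> Prop) : ~ (\forall n \near \oo, Q n) ->
  forall M, exists n, (M <= n)%N /\ ~ Q n.
Proof.
move=> H M; apply: contrapT => /forallNP Hn; apply: H.
exists M => // n /= hn; have := Hn n; move/not_andP => [] // h.
exact: contrapT.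
Qed.

Lemma inc_ge (f : nat -> nat) : increasing_seq f -> forall n, (n <= f n)%N.
Proof.
move/increasing_seqP => H; elim=> [//|n IH].
exact: leq_ltn_trans IH (H n).
Qed.

Lemma ge_oo (f : nat -> nat) : (forall n, (n <= f n)%N) -> f @ \oo --> \oo.
Proof.
move=> H A [M _ HM]; exists M => // n /= hn; apply: HM => /=.
exact: leq_trans hn (H n).
Qed.

Lemma multi_bw (I : finType) (u : I -> nat -> R) :
  (forall i n, `|u i n| <= 1) ->
  exists phi : nat -> nat, (forall n, (n <= phi n)%N) /\
    forall i, exists l : R, (fun n => u i (phi n)) @ \oo --> l.
Proof.
move=> Hb.
suff : forall s : seq I, exists phi : nat -> nat, (forall n, (n <= phi n)%N) /\
    forall i, i \in s -> exists l : R, (fun n => u i (phi n)) @ \oo --> l.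
  move=> /(_ (enum I)) [phi [h1 h2]]; exists phi; split => // i.
  by apply: h2; rewrite mem_enum.
elim=> [|a s [phi [h1 h2]]].
  by exists id; split.
have bnd : bounded_fun (fun n => u a (phi n)).
  exists 1; split; first by rewrite num_real.
  move=> M M1 n _; exact: le_trans (Hb a (phi n)) (ltW M1).
have [psi psiI cv] := bolzano_weierstrass bnd.
have psige := inc_ge psiI.
exists (phi \o psi); split.
  move=> n /=; exact: leq_trans (psige n) (h1 _).
move=> i; rewrite inE => /orP [/eqP -> | iis].
  by move/cvg_ex: cv => [l hl]; exists l.
have [l hl] := h2 i iis; exists l.
exact: (cvg_comp _ _ (ge_oo psige) hl).
Qed.

Lemma dsep_contra (k : nat) (q p x : P) : Dsep k q p ->
  p.1 < x.1 < p.1 + k%:R^-1 -> p.2 < x.2 < p.2 + k%:R^-1 -> cellb k q x -> False.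
Proof.
case=> h /andP [a1 a2] /andP [a3 a4] [/andP [b1 b2] /andP [b3 b4]];
  move: h; rewrite ler_normr => /orP [] h; lra.
Qed.

Lemma half (k N : nat) (a b : 'I_N -> P) (K : set P) (p : 'I_N) :
  (3 <= k)%N ->
  (forall i i', i != i' -> Dsep k (a i) (a i')) ->
  (forall x, K x -> exists j, cellb k (b j) x) ->
  (forall y, K y -> K (psi k (a p) y)) ->
  (forall r, 0 < r -> exists z, K z /\ (0 < z.1 < r) /\ (0 < z.2 < r)) ->
  (forall j, b j <> a p) ->
  (forall j, (forall i, a i <> b j) -> (a p).1 + (a p).2 <= (b j).1 + (b j).2) ->
  False.
Proof.
move=> k3 Da cov inv small unp minp.
have kp : 0 < (k%:R : R) by rewrite ltr0n; lia.
pose ap := a p.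
pose g j := if ((b j).1 <= ap.1) && ((b j).2 <= ap.2) then 1
            else Num.max ((b j).1 - ap.1) ((b j).2 - ap.2).
have gpos : forall j, 0 < g j.
  move=> j; rewrite /g; case: ifP => // /negbT; rewrite negb_and -!ltNge.
  by move=> /orP [] h; rewrite lt_max ?subr_gt0 h ?orbT.
have [r0 r0p Hr0] := fin_pos_min gpos.
have rp : 0 < Num.min 1 (r0 * k%:R) by rewrite lt_min ltr01 mulr_gt0.
have [z [Kz [/andP [z1 z1'] /andP [z2 z2']]]] := small _ rp.
move: z1' z2'; rewrite !lt_min => /andP [z1a z1b] /andP [z2a z2b].
pose x := psi k ap z.
have Kx : K x by apply: inv.
have ki : 0 < (k%:R : R)^-1 by rewrite invr_gt0.
have zk1 : 0 < z.1 / k%:R by rewrite divr_gt0.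
have zk2 : 0 < z.2 / k%:R by rewrite divr_gt0.
have zk1' : z.1 / k%:R < k%:R^-1 by rewrite -[X in _ < X]mul1r ltr_pM2r.
have zk2' : z.2 / k%:R < k%:R^-1 by rewrite -[X in _ < X]mul1r ltr_pM2r.
have zr1 : z.1 / k%:R < r0 by rewrite ltr_pdivrMr.
have zr2 : z.2 / k%:R < r0 by rewrite ltr_pdivrMr.
have [j cj] := cov x Kx.
case: (pselect (exists i, a i = b j)) => [[i ei] | ni].
  have ip : i != p by apply/eqP => ip; apply: (unp j); rewrite -ei ip.
  apply: (dsep_contra (Da i p ip)) (_ : cellb k (a i) x).
  - rewrite /x /psi /=; apply/andP; split; lra.
  - rewrite /x /psi /=; apply/andP; split; lra.
  - by rewrite ei.
have ni' : forall i, a i <> b j by move=> i ei; apply: ni; exists i.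
have wm := minp j ni'.
case: cj => [/andP [c1 _] /andP [c2 _]].
have := Hr0 j; rewrite /g; case: ifP.
  case/andP => l1 l2 _; apply: (unp j).
  have -> : b j = ((b j).1, (b j).2) by case: (b j).
  have -> : a p = ((a p).1, (a p).2) by case: (a p).
  rewrite -/ap in wm l1 l2 *.
  by congr pair; apply/eqP; rewrite eq_le ?l1 ?l2 /=; lra.
move=> _; rewrite le_max => /orP [] h; rewrite /x /psi /= in c1 c2; lra.
Qed.

Lemma uniq_cells (k N : nat) (a b : 'I_N -> P) (K : set P) :
  (3 <= k)%N ->
  (forall i i', i != i' -> Dsep k (a i) (a i')) ->
  (forall i i', i != i' -> Dsep k (b i) (b i')) ->
  (forall x, K x -> exists j, cellb k (a j) x) ->
  (forall x, K x -> exists j, cellb k (b j) x) ->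
  (forall i y, K y -> K (psi k (a i) y)) ->
  (forall i y, K y -> K (psi k (b i) y)) ->
  (forall r, 0 < r -> exists z, K z /\ (0 < z.1 < r) /\ (0 < z.2 < r)) ->
  forall i, exists j, b j = a i.
Proof.
move=> k3 Da Db cova covb inva invb small i0.
apply: contrapT => /forallNP n0.
pose pos (t : 'I_N + 'I_N) := match t with inl i => a i | inr j => b j end.
pose unm (t : 'I_N + 'I_N) := match t with
  | inl i => [forall j, b j != a i] | inr j => [forall i, a i != b j] end.
have u0 : unm (inl i0) by apply/forallP => j; apply/eqP; apply: n0.
have [t [ut mt]] : exists t, unm t /\ forall t', unm t' ->
    (pos t).1 + (pos t).2 <= (pos t').1 + (pos t').2.
  case: (@arg_minP _ _ _ (inl i0) unm (fun t => (pos t).1 + (pos t).2) u0) => t Pt H.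
  by exists t.
case: t ut mt => [p | q] /= ut mt.
- apply: (@half k N a b K p k3 Da covb (inva p) small).
  + by move=> j; apply/eqP; move/forallP: ut => /(_ j).
  + move=> j nj; apply: (mt (inr j)) => /=; apply/forallP => i; apply/eqP; exact: nj.
- apply: (@half k N b a K q k3 Db cova (invb q) small).
  + by move=> j; apply/eqP; move/forallP: ut => /(_ j).
  + move=> j nj; apply: (mt (inl j)) => /=; apply/forallP => i; apply/eqP; exact: nj.
Qed.

End Uniq.
Section PartB.
Variable R : realType.
Set Implicit Arguments. Unset Strict Implicit.
Notation P := (R * R)%type.

Lemma near_ex2 (Q1 Q2 : nat -> Prop) : (\forall n \near \oo, Q1 n) ->
  (\forall n \near \oo, Q2 n) -> exists n, Q1 n /\ Q2 n.
Proof.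
case=> M1 _ H1 [M2 _ H2]; exists (maxn M1 M2); split.
- by apply: H1 => /=; rewrite leq_maxl.
- by apply: H2 => /=; rewrite leq_maxr.
Qed.

Lemma att_cover (k N : nat) (c : 'I_N -> P) (K : set P) :
  USC k c -> attractor k c K -> forall x, K x -> exists j, cellb k (c j) x.
Proof.
move=> U A x Kx; have k3 := USC_k U; have k0 : (0 < k)%N by lia.
have [j [y [Ky ->]]] := att_dec A Kx.
exists j; apply/(cellP _ _ k0); exists y => //; exact: (att_sq U A)...
Qed.

Lemma hd_near (Kn : nat -> set P) (K : set P) : hausdorff_cvg Kn K ->
  forall e, 0 < e -> \forall n \near \oo, (hausdorff_dist (Kn n) K < e%:E)%E.
Proof.
move=> /fine_cvgP [fin Hf] e e0.
move/cvgrPdist_lt: Hf => /(_ e e0) H.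
apply: filterS2 fin H => n fn; rewrite -(fineK fn) lte_fin /= sub0r normrN => h.
exact: le_lt_trans (ler_norm _) h.
Qed.

Lemma key (k N : nat) (cn : nat -> 'I_N -> P) (c : 'I_N -> P)
  (Kn : nat -> set P) (K : set P) :
  (forall n, USC k (cn n)) -> USC k c ->
  (forall n, attractor k (cn n) (Kn n)) -> attractor k c K ->
  hausdorff_cvg Kn K ->
  forall e, 0 < e -> forall i, \forall n \near \oo, exists j, edist2 (cn n j) (c i) < e.
Proof.
move=> Un U An A HK e e0 i.
have k3 := USC_k U; have k0 : (0 < k)%N by lia.
have kp : 0 < (k%:R : R) by rewrite ltr0n.
have ki : 0 < (k%:R : R)^-1 by rewrite invr_gt0.
have ki1 : (k%:R : R)^-1 <= 1 by rewrite invf_le1 // ler1n; lia.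
apply: contrapT => Hn.
have := not_near Hn => /choice [g Hg].
pose u (t : 'I_N * bool) m := if t.2 then (cn (g m) t.1).1 else (cn (g m) t.1).2.
have bnd : forall t m, `|u t m| <= 1.
  move=> [j b] m; have [c1 c2 c3 c4] := USC_cb (Un (g m)) j.
  rewrite /u /=; case: b; rewrite ler_norml; apply/andP; split; lra.
have [phi [phige Hl]] := multi_bw bnd.
have /choice [lf Hlf] := Hl.
pose h m := g (phi m).
have hge : forall m, (m <= h m)%N.
  move=> m; exact: leq_trans (phige m) (Hg (phi m)).1.
pose c' j : P := (lf (j, true), lf (j, false)).
have F1 : forall j, (fun m => cn (h m) j) @ \oo --> c' j.
  move=> j; have e1 := Hlf (j, true); have e2 := Hlf (j, false).
  rewrite /u /= in e1 e2.
  have -> : (fun m => cn (h m) j) = (fun m => ((cn (h m) j).1, (cn (h m) j).2)).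
    by apply: funext => m; case: (cn (h m) j).
  exact: cvg_pair e1 e2.
have F1e : forall j e', 0 < e' -> \forall m \near \oo, edist2 (cn (h m) j) (c' j) < e'.
  move=> j; exact: cvg_edist (F1 j).
have FH : forall e', 0 < e' -> \forall m \near \oo,
    (forall x, Kn (h m) x -> exists z, K z /\ edist2 x z < e') /\
    (forall z, K z -> exists x, Kn (h m) x /\ edist2 z x < e').
  move=> e' e'0; apply: filterS (near_comp hge (hd_near HK e'0)) => m.
  exact: hd_lt.
have [cK _] : compact K /\ True by case: A.
have cK' : closed K by apply: compact_closed => //; exact: norm_hausdorff.
have H1 : forall j j', j != j' -> Dsep k (c' j) (c' j').
  move=> j j' jj'; rewrite /Dsep; apply: contrapT => /not_orP [/negP h1 /negP h2].
  rewrite -ltNge in h1; rewrite -ltNge in h2.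
  set s := (k%:R : R)^-1 in h1 h2.
  set gp := Num.min (s - `|(c' j).1 - (c' j').1|) (s - `|(c' j).2 - (c' j').2|).
  have gp0 : 0 < gp by rewrite lt_min !subr_gt0 h1 h2.
  have g1 : gp <= s - `|(c' j).1 - (c' j').1| by rewrite ge_min lexx.
  have g2 : gp <= s - `|(c' j).2 - (c' j').2| by rewrite ge_min lexx orbT.
  have eta0 : 0 < gp / 2 by rewrite divr_gt0.
  have [m [m1 m2]] := near_ex2 (F1e j _ eta0) (F1e j' _ eta0).
  have D := USC_D (Un (h m)) jj'.
  have a1 := le_lt_trans (edist_c1 _ _) m1; have a2 := le_lt_trans (edist_c2 _ _) m1.
  have b1 := le_lt_trans (edist_c1 _ _) m2; have b2 := le_lt_trans (edist_c2 _ _) m2.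
  move: a1 a2 b1 b2; rewrite !ltr_norml => /andP [a1 a1'] /andP [a2 a2'] /andP [b1 b1'] /andP [b2 b2'].
  have q1 := ler_norm ((c' j).1 - (c' j').1); have q1' := ler_norm (- ((c' j).1 - (c' j').1)).
  have q2 := ler_norm ((c' j).2 - (c' j').2); have q2' := ler_norm (- ((c' j).2 - (c' j').2)).
  rewrite normrN in q1'; rewrite normrN in q2'.
  have hg : gp / 2 + gp / 2 = gp by rewrite -splitr.
  case: D; rewrite -/s ler_normr => /orP [] d; lra.
have H2 : forall j y, K y -> K (psi k (c' j) y).
  move=> j y Ky; apply: (closed_edist cK') => e' e'0.
  have e3 : 0 < e' / 3 by rewrite divr_gt0.
  have [m [m1 [HA HB]]] := near_ex2 (F1e j _ e3) (FH _ e3).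
  have [x [Kx hx]] := HB y Ky.
  have Kx2 : Kn (h m) (psi k (cn (h m) j) x) by apply: att_inv (An _) _ _ Kx.
  have [z [Kz hz]] := HA _ Kx2.
  exists z; split => //.
  apply: le_lt_trans (edist_tri _ (psi k (cn (h m) j) x) _) _.
  have := edist_psi (c' j) (cn (h m) j) y x k0.
  have : edist2 y x / k%:R <= edist2 y x.
    by rewrite ler_pdivrMr // ler_peMr ?edist_ge0 // ler1n; lia.
  rewrite edist_sym in m1.
  have : e' / 3 + e' / 3 + e' / 3 = e'.
    by field.
  lra.
have H3 : forall x, K x -> exists j, cellb k (c' j) x.
  move=> x Kx.
  pose Q j (e' : R) := ((c' j).1 - e' <= x.1 <= (c' j).1 + k%:R^-1 + e') /\
                       ((c' j).2 - e' <= x.2 <= (c' j).2 + k%:R^-1 + e').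
  have [j Hj] : exists j, forall e', 0 < e' -> Q j e'.
    apply: fin_pigeon.
      move=> j' a b a0 ab [/andP [q1 q2] /andP [q3 q4]]; split; apply/andP; split; lra.
    move=> e' e'0.
    have e2 : 0 < e' / 2 by rewrite divr_gt0.
    have Fall : \forall m \near \oo, forall j, edist2 (cn (h m) j) (c' j) < e' / 2.
      by apply: filter_forall => j; apply: F1e.
    have [m [m1 [_ HB]]] := near_ex2 Fall (FH _ e2).
    have [x' [Kx' hx]] := HB x Kx.
    have [j [/andP [c1 c2] /andP [c3 c4]]] := att_cover (Un (h m)) (An (h m)) Kx'.
    exists j.
    have a1 := le_lt_trans (edist_c1 _ _) (m1 j); have a2 := le_lt_trans (edist_c2 _ _) (m1 j).
    have b1 := le_lt_trans (edist_c1 _ _) hx; have b2 := le_lt_trans (edist_c2 _ _) hx.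
    move: a1 a2 b1 b2; rewrite !ltr_norml => /andP [a1 a1'] /andP [a2 a2'] /andP [b1 b1'] /andP [b2 b2'].
    have hg : e' / 2 + e' / 2 = e' by rewrite -splitr.
    split; apply/andP; split; lra.
  exists j; split; apply/andP; split; apply/ler_addgt0Pr => e' e'0;
    have [/andP [q1 q2] /andP [q3 q4]] := Hj e' e'0; lra.
have small := att_small U A.
have [j ej] := uniq_cells k3 (USC_D U) H1 (att_cover U A) H3 (att_inv A) H2 small i.
have [m hm] := near_ex (F1e j e e0).
apply: (Hg (phi m)).2; exists j; rewrite -ej; exact: hm.
Qed.

End PartB.
Section PartB2.
Variable R : realType.
Set Implicit Arguments. Unset Strict Implicit.
Notation P := (R * R)%type.

Lemma partB (k N : nat) (cn : nat -> 'I_N -> P) (c : 'I_N -> P)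
  (Kn : nat -> set P) (K : set P) :
  (forall n, USC k (cn n)) -> USC k c ->
  (forall n, attractor k (cn n) (Kn n)) -> attractor k c K ->
  hausdorff_cvg Kn K ->
  exists s : nat -> {perm 'I_N}, forall i : 'I_N, (fun n => cn n (s n i)) @ \oo --> c i.
Proof.
move=> Un U An A HK.
have k3 := USC_k U.
have kp : 0 < (k%:R : R) by rewrite ltr0n; lia.
have ki : 0 < (k%:R : R)^-1 by rewrite invr_gt0.
pose err n (sg : {perm 'I_N}) := \sum_i edist2 (cn n (sg i)) (c i).
have : forall n, exists sg : {perm 'I_N}, forall tau, err n sg <= err n tau.
  move=> n; case: (@arg_minP _ _ {perm 'I_N} 1%g xpredT (err n) isT) => sg _ H.
  by exists sg => tau; exact: H.
move/choice => [s Hs]; exists s => i0.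
apply: edist_cvg => e e0.
have N1 : 0 < (N%:R : R) + 1 by rewrite ltr_wpDl // ler0n.
pose e' := Num.min (e / (N%:R + 1)) (k%:R^-1 / 2).
have e'0 : 0 < e' by rewrite lt_min !divr_gt0.
have e'1 : e' <= e / (N%:R + 1) by rewrite ge_min lexx.
have e'2 : e' <= k%:R^-1 / 2 by rewrite ge_min lexx orbT.
have Fall : \forall n \near \oo, forall i, exists j, edist2 (cn n j) (c i) < e'.
  by apply: filter_forall => i; apply: (key Un U An A HK e'0 i).
apply: filterS Fall => n /choice [f Hf].
have finj : injective f.
  move=> i i' fi; apply/eqP; apply: contraT => ii'.
  suff : False by [].
  have D := USC_D U ii'.
  have t := edist_tri (c i) (cn n (f i')) (c i').
  have s1 : edist2 (c i) (cn n (f i')) = edist2 (cn n (f i)) (c i) by rewrite -fi edist_sym.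
  have := Hf i; have := Hf i'.
  have := edist_c1 (c i) (c i'); have := edist_c2 (c i) (c i').
  have hg : k%:R^-1 / 2 + k%:R^-1 / 2 = (k%:R : R)^-1 by rewrite -splitr.
  case: D => d; lra.
pose tau := perm finj.
have Et : err n tau < e.
  rewrite /err; apply: (@le_lt_trans _ _ (\sum_(i < N) e')).
    by apply: ler_sum => i _; rewrite permE; apply: ltW (Hf i).
  rewrite sumr_const card_ord -mulr_natr.
  apply: (@le_lt_trans _ _ (e / (N%:R + 1) * N%:R)).
    by apply: ler_wpM2r; rewrite ?ler0n.
  by rewrite mulrAC ltr_pdivrMr // ltr_pM2l // ltrDl ltr01.
have h1 : edist2 (cn n (s n i0)) (c i0) <= err n (s n).
  rewrite /err (bigD1 i0) //= lerDl; apply: sumr_ge0 => i _; exact: edist_ge0.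
exact: le_lt_trans h1 (le_lt_trans (Hs n tau) Et).
Qed.

End PartB2.

Theorem lemma7p2 (R : realType) (k N : nat)
  (cn : nat -> 'I_N -> (R * R)%type) (c : 'I_N -> (R * R)%type)
  (Kn : nat -> set (R * R)) (K : set (R * R)) :
  (forall n, USC k (cn n)) -> USC k c ->
  (forall n, attractor k (cn n) (Kn n)) -> attractor k c K ->
  ((forall i : 'I_N, (fun n => cn n i) @ \oo --> c i) -> hausdorff_cvg Kn K) /\
  (hausdorff_cvg Kn K ->
     exists s : nat -> {perm 'I_N},
       forall i : 'I_N, (fun n => cn n (s n i)) @ \oo --> c i).
Proof.
move=> Un U An A; split.
- exact: partA Un U An A.
- exact: partB Un U An A.
Qed.
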